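(* Let $r,n\in\mathbb{N}$ with $$e\left(\tfrac{1}{2}\log(2n-1)+1\right)\leq r\leq n.$$ Then for any $s_1,\ldots,s_r\in\mathbb{N}$, $\overline{H}_n(s_1,\ldots,s_r)$ is not an integer.
   Context: $\mathbb{N}$ is the set of positive integers, $\log$ is the natural logarithm, and $\overline{H}_n(s_1,\ldots,s_r)=\sum_{0\leq k_1<\cdots<k_r\leq n-1}\prod_{j=1}^r (2k_j+1)^{-s_j}$. *)

(* Defs.v *)
From Stdlib Require Import Reals List ZArith.
Open Scope R_scope.

(* Hbar_from lo n s = sum over lo <= k_1 < ... < k_r <= n-1 of
   prod_j (2 k_j + 1)^(- s_j), where s = [s_1; ...; s_r]. *)
Fixpoint Hbar_from (lo n : nat) (s : list nat) : R :=
  match s with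
  | nil => 1
  | s1 :: rest =>
      fold_right Rplus 0
        (map (fun k => / (INR (2 * k + 1) ^ s1) * Hbar_from (S k) n rest)
             (seq lo (n - lo)))
  end.

Definition Hbar (n : nat) (s : list nat) : R := Hbar_from 0 n s.

(* Main.v *)
Require Import Defs.
From Stdlib Require Import Reals List ZArith Lra Lia.
Open Scope R_scope.

Lemma sum_nonneg (f : nat -> R) l :
  (forall x, In x l -> 0 <= f x) -> 0 <= fold_right Rplus 0 (map f l).
Proof.
  induction l as [|a l IH]; simpl; intros H; [lra|].
  assert (0 <= f a) by (apply H; left; auto).
  assert (0 <= fold_right Rplus 0 (map f l)) by (apply IH; intros; apply H; right; auto).
  lra.
Qed.

Lemma sum_le (f g : nat -> R) l :
  (forall x, In x l -> f x <= g x) ->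
  fold_right Rplus 0 (map f l) <= fold_right Rplus 0 (map g l).
Proof.
  induction l as [|a l IH]; simpl; intros H; [lra|].
  assert (f a <= g a) by (apply H; left; auto).
  assert (fold_right Rplus 0 (map f l) <= fold_right Rplus 0 (map g l))
    by (apply IH; intros; apply H; right; auto).
  lra.
Qed.

Lemma sum_scal_r (f : nat -> R) c l :
  fold_right Rplus 0 (map (fun k => f k * c) l) = fold_right Rplus 0 (map f l) * c.
Proof. induction l as [|a l IH]; simpl; [ring|]. rewrite IH; ring. Qed.

Lemma sum_app (f : nat -> R) l1 l2 :
  fold_right Rplus 0 (map f (l1 ++ l2)) =
  fold_right Rplus 0 (map f l1) + fold_right Rplus 0 (map f l2).
Proof. induction l1 as [|a l IH]; simpl; [ring|]. rewrite IH; ring. Qed.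

Lemma seq_split lo n : (lo < n)%nat -> seq lo (n - lo) = lo :: seq (S lo) (n - S lo).
Proof. intros H. replace (n - lo)%nat with (S (n - S lo)) by lia. reflexivity. Qed.

Definition a (k : nat) : R := / (INR (2 * k + 1) ^ 1).
Definition T n lo := fold_right Rplus 0 (map a (seq lo (n - lo))).
Definition E n lo m := Hbar_from lo n (repeat 1%nat m).

Lemma INR_odd_pos k : 0 < INR (2 * k + 1).
Proof. apply lt_0_INR; lia. Qed.

Lemma a_pos k : 0 < a k.
Proof. unfold a. apply Rinv_0_lt_compat, pow_lt, INR_odd_pos. Qed.

Lemma T_nonneg n lo : 0 <= T n lo.
Proof. apply sum_nonneg. intros; left; apply a_pos. Qed.

Lemma T_split n lo : (lo < n)%nat -> T n lo = a lo + T n (S lo).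
Proof. intros H. unfold T. rewrite (seq_split lo n H). reflexivity. Qed.

Lemma Hbar_nonneg n s : forall lo, 0 <= Hbar_from lo n s.
Proof.
  induction s as [|s1 rest IH]; intros lo; cbn [Hbar_from]; [lra|].
  apply sum_nonneg; intros k _. apply Rmult_le_pos; [|apply IH].
  left; apply Rinv_0_lt_compat, pow_lt, INR_odd_pos.
Qed.

Lemma Hbar_pos n s : forall lo, (length s + lo <= n)%nat -> 0 < Hbar_from lo n s.
Proof.
  induction s as [|s1 rest IH]; intros lo Hl; cbn [Hbar_from]; [lra|].
  simpl in Hl. rewrite (seq_split lo n) by lia. cbn [map fold_right].
  assert (0 < / (INR (2 * lo + 1) ^ s1) * Hbar_from (S lo) n rest).
  { apply Rmult_lt_0_compat; [apply Rinv_0_lt_compat, pow_lt, INR_odd_pos|].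
    apply IH; lia. }
  assert (0 <= fold_right Rplus 0 (map (fun k => / (INR (2 * k + 1) ^ s1) * Hbar_from (S k) n rest)
        (seq (S lo) (n - S lo)))).
  { apply sum_nonneg; intros k _. apply Rmult_le_pos; [|apply Hbar_nonneg].
    left; apply Rinv_0_lt_compat, pow_lt, INR_odd_pos. }
  lra.
Qed.

Lemma Hbar_le_E n s : forall lo, (forall x, In x s -> (1 <= x)%nat) ->
  Hbar_from lo n s <= E n lo (length s).
Proof.
  induction s as [|s1 rest IH]; intros lo Hs; unfold E; cbn [Hbar_from length repeat]; [lra|].
  apply sum_le; intros k _.
  apply Rmult_le_compat.
  - left; apply Rinv_0_lt_compat, pow_lt, INR_odd_pos.
  - apply Hbar_nonneg.
  - apply Rinv_le_contravar; [apply pow_lt, INR_odd_pos|].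
    apply Rle_pow; [|apply Hs; left; auto].
    replace 1 with (INR 1) by reflexivity. apply le_INR; lia.
  - specialize (IH (S k)). unfold E in IH. apply IH.
    intros; apply Hs; right; auto.
Qed.

Lemma bern x y m : 0 <= x -> 0 <= y ->
  y ^ (S m) + INR (S m) * (x * y ^ m) <= (x + y) ^ (S m).
Proof.
  intros Hx Hy. induction m as [|m IH].
  - simpl; lra.
  - rewrite S_INR.
    change ((x + y) ^ S (S m)) with ((x + y) * (x + y) ^ S m).
    change (y ^ S (S m)) with (y * y ^ S m).
    change (y ^ S m) with (y * y ^ m) in *.
    assert (HY : 0 <= y ^ m) by (apply pow_le; auto).
    assert (HN : 0 <= INR (S m)) by apply pos_INR.
    set (Y := y ^ m) in *. set (P := (x + y) ^ S m) in *. set (N := INR (S m)) in *.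
    assert (H1 : (x + y) * (y * Y + N * (x * Y)) <= (x + y) * P)
      by (apply Rmult_le_compat_l; lra).
    assert (H2 : 0 <= N * (x * (x * Y)))
      by (apply Rmult_le_pos; auto; apply Rmult_le_pos; auto; apply Rmult_le_pos; auto).
    nra.
Qed.

Lemma tele n m : forall d lo, (n - lo = d)%nat ->
  INR (S m) * fold_right Rplus 0 (map (fun k => a k * T n (S k) ^ m) (seq lo (n - lo)))
  <= T n lo ^ (S m).
Proof.
  induction d as [|d IH]; intros lo Hd.
  - rewrite Hd. cbn [seq map fold_right]. rewrite Rmult_0_r. apply pow_le, T_nonneg.
  - rewrite (seq_split lo n) by lia. cbn [map fold_right].
    rewrite (T_split n lo) by lia.
    specialize (IH (S lo) ltac:(lia)).
    pose proof (bern (a lo) (T n (S lo)) m (Rlt_le _ _ (a_pos lo)) (T_nonneg n (S lo))).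
    rewrite Rmult_plus_distr_l. lra.
Qed.

Lemma E_bound n m : forall lo, E n lo m * INR (fact m) <= T n lo ^ m.
Proof.
  induction m as [|m IH]; intros lo.
  - unfold E; simpl; lra.
  - unfold E. cbn [repeat Hbar_from]. rewrite fact_simpl, mult_INR.
    assert (Hs : fold_right Rplus 0
       (map (fun k => / (INR (2 * k + 1) ^ 1) * Hbar_from (S k) n (repeat 1%nat m))
          (seq lo (n - lo))) * INR (fact m) <=
       fold_right Rplus 0 (map (fun k => a k * T n (S k) ^ m) (seq lo (n - lo)))).
    { rewrite <- sum_scal_r. apply sum_le; intros k _.
      specialize (IH (S k)). unfold E in IH.
      rewrite Rmult_assoc. apply Rmult_le_compat_l; [left; apply a_pos|exact IH]. }
    pose proof (tele n m (n - lo) lo eq_refl).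
    assert (0 <= INR (S m)) by apply pos_INR.
    assert (INR (S m) * (fold_right Rplus 0
       (map (fun k => / (INR (2 * k + 1) ^ 1) * Hbar_from (S k) n (repeat 1%nat m))
          (seq lo (n - lo))) * INR (fact m)) <= INR (S m) *
       fold_right Rplus 0 (map (fun k => a k * T n (S k) ^ m) (seq lo (n - lo))))
      by (apply Rmult_le_compat_l; auto).
    lra.
Qed.

Lemma ln_le_x1 y : 0 < y -> ln y <= y - 1.
Proof.
  intros Hy. pose proof (exp_ineq1_le (y - 1)).
  rewrite <- (ln_exp (y - 1)).
  destruct (Rle_lt_or_eq_dec y (exp (y - 1))) as [Hl|He]; [lra| |].
  - left; apply ln_increasing; auto.
  - rewrite <- He; lra.
Qed.

Lemma T0_bound n : (1 <= n)%nat -> T n 0 <= 1 + / 2 * ln (INR (2 * n - 1)).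
Proof.
  induction n as [|n IH]; intros Hn; [lia|].
  destruct (Nat.eq_dec n 0) as [->|Hn0].
  - unfold T, a. simpl. rewrite ln_1. lra.
  - specialize (IH ltac:(lia)).
    assert (HT : T (S n) 0 = T n 0 + a n).
    { unfold T. rewrite !Nat.sub_0_r, seq_S, sum_app. simpl. ring. }
    rewrite HT.
    replace (2 * S n - 1)%nat with (2 * n + 1)%nat by lia.
    assert (Hu1 : INR (2 * n + 1) = 2 * INR n + 1).
    { rewrite plus_INR, mult_INR. simpl. ring. }
    assert (Hu0 : INR (2 * n - 1) = 2 * INR n - 1).
    { rewrite minus_INR by lia. rewrite mult_INR. simpl. ring. }
    assert (Hn1 : 1 <= INR n) by (replace 1 with (INR 1) by reflexivity; apply le_INR; lia).
    assert (Ha : a n = / (2 * INR n + 1)) by (unfold a; rewrite Hu1; simpl; rewrite Rmult_1_r; reflexivity).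
    rewrite Ha, Hu1. rewrite Hu0 in IH.
    pose proof (ln_le_x1 ((2 * INR n - 1) * / (2 * INR n + 1))) as Hl.
    assert (0 < (2 * INR n - 1) * / (2 * INR n + 1)).
    { apply Rmult_lt_0_compat; [lra|apply Rinv_0_lt_compat; lra]. }
    specialize (Hl H).
    rewrite ln_mult, ln_Rinv in Hl by (try apply Rinv_0_lt_compat; lra).
    assert (Heq : (2 * INR n - 1) * / (2 * INR n + 1) - 1 = - 2 * / (2 * INR n + 1))
      by (field; lra).
    rewrite Heq in Hl. lra.
Qed.

Lemma exp_pow_n x k : exp x ^ k = exp (INR k * x).
Proof.
  induction k as [|k IH]; simpl.
  - rewrite Rmult_0_l, exp_0; reflexivity.
  - rewrite IH. rewrite <- exp_plus. f_equal. destruct k; simpl; ring.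
Qed.

Lemma succ_pow r : (1 <= r)%nat -> INR (S r) ^ r <= INR r ^ r * exp 1.
Proof.
  intros Hr.
  assert (Hp : 0 < INR r) by (apply lt_0_INR; lia).
  assert (INR (S r) = INR r * (1 + / INR r)) by (rewrite S_INR; field; lra).
  rewrite H, Rpow_mult_distr. apply Rmult_le_compat_l; [apply pow_le; lra|].
  replace (exp 1) with (exp (/ INR r) ^ r).
  - apply pow_incr. split; [|apply exp_ineq1_le].
    assert (0 < / INR r) by (apply Rinv_0_lt_compat; auto). lra.
  - rewrite exp_pow_n. f_equal. field; lra.
Qed.

Lemma fact_lt r : (1 <= r)%nat -> INR r ^ r < INR (fact r) * exp 1 ^ r.
Proof.
  induction r as [|r IH]; intros Hr; [lia|].
  destruct (Nat.eq_dec r 0) as [->|Hr0].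
  - simpl. pose proof (exp_ineq1 1 ltac:(lra)). lra.
  - specialize (IH ltac:(lia)).
    pose proof (succ_pow r ltac:(lia)).
    assert (He : 0 < exp 1) by apply exp_pos.
    assert (HS : 0 < INR (S r)) by (apply lt_0_INR; lia).
    change (INR (S r) ^ S r) with (INR (S r) * INR (S r) ^ r).
    change (exp 1 ^ S r) with (exp 1 * exp 1 ^ r).
    rewrite fact_simpl, mult_INR.
    apply Rle_lt_trans with (INR (S r) * (INR r ^ r * exp 1)).
    + apply Rmult_le_compat_l; lra.
    + assert (INR r ^ r * exp 1 < INR (fact r) * exp 1 ^ r * exp 1)
        by (apply Rmult_lt_compat_r; auto).
      assert (INR (S r) * (INR r ^ r * exp 1) < INR (S r) * (INR (fact r) * exp 1 ^ r * exp 1))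
        by (apply Rmult_lt_compat_l; auto).
      lra.
Qed.

Theorem lemma2p3 (r n : nat) (s : list nat) :
  (1 <= r)%nat -> (1 <= n)%nat ->
  exp 1 * (/ 2 * ln (INR (2 * n - 1)) + 1) <= INR r ->
  (r <= n)%nat ->
  length s = r ->
  (forall x, In x s -> (1 <= x)%nat) ->
  ~ (exists z : Z, Hbar n s = IZR z).
Proof.
  intros Hr Hn Hb Hrn Hl Hs [z Hz].
  assert (Hpos : 0 < Hbar n s) by (apply Hbar_pos; lia).
  assert (HE : Hbar n s <= E n 0 r) by (rewrite <- Hl; apply Hbar_le_E; auto).
  pose proof (E_bound n r 0) as HEb.
  pose proof (T0_bound n Hn) as HT.
  pose proof (T_nonneg n 0) as HT0.
  assert (He : 0 < exp 1) by apply exp_pos.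
  assert (HTe : T n 0 * exp 1 <= INR r).
  { assert (T n 0 * exp 1 <= (1 + / 2 * ln (INR (2 * n - 1))) * exp 1)
      by (apply Rmult_le_compat_r; lra). lra. }
  assert (Hp1 : (T n 0 * exp 1) ^ r <= INR r ^ r)
    by (apply pow_incr; split; [apply Rmult_le_pos; lra | exact HTe]).
  rewrite Rpow_mult_distr in Hp1.
  pose proof (fact_lt r Hr) as Hf.
  assert (Her : 0 < exp 1 ^ r) by (apply pow_lt; auto).
  assert (HTf : T n 0 ^ r < INR (fact r)).
  { apply (Rmult_lt_reg_r (exp 1 ^ r)); auto. lra. }
  assert (Hfp : 0 < INR (fact r)) by (apply lt_0_INR, lt_O_fact).
  assert (HE1 : E n 0 r < 1).
  { apply (Rmult_lt_reg_r (INR (fact r))); auto. lra. }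
  unfold Hbar in *.
  rewrite Hz in Hpos, HE.
  apply lt_IZR in Hpos. assert (IZR z < IZR 1) by (simpl; lra).
  apply lt_IZR in H. lia.
Qed.
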